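(* For every finite nonempty subset $C \subset \mathbb N_{\ge 2}$ there is a finitely generated Krull monoid $H$ with finite class group such that $\mathcal R(H) = \operatorname{Ca}(H) = C$ and $\daleth^*(H) = C\setminus\{2\}$.
   Context: A monoid is a commutative cancellative semigroup with identity; $\mathcal A(H)$ denotes its atoms, $H_{\mathrm{red}}=H/H^\times$. For $a\in H$, $\mathsf Z(a)$ is the set of factorizations of $a$ (elements of the free abelian monoid on $\mathcal A(H_{\mathrm{red}})$ multiplying to $aH^\times$), $|z|$ is the number of atoms in $z$, and $\mathsf L(a)=\{|z|: z\in\mathsf Z(a)\}$. $\daleth^*(H) = \{\min(\mathsf L(uv)\setminus\{2\}) : u,v \in \mathcal A(H),\ |\mathsf L(uv)|>1\}$. Distance: writing $z = u_1\cdots u_k v_1\cdots v_\ell$, $z'=u_1\cdots u_k w_1\cdots w_m$ with no $v_i$ equal to any $w_j$, $\mathsf d(z,z')=\max\{\ell,m\}$. An $N$-chain from $z$ to $z'$ in $\mathsf Z(a)$ is a sequence $z=z_0,\dots,z_n=z'$ in $\mathsf Z(a)$ with $\mathsf d(z_{i-1},z_i)\le N$. $\mathsf c(a)$ is the least $N$ such that any two factorizations of $a$ are connected by an $N$-chain; $\operatorname{Ca}(H)=\{\mathsf c(a): a\in H,\ |\mathsf Z(a)|>1\}$. $\mathcal R(H)$ is the set of $d\in\mathbb N_{\ge2}$ such that some $a\in H$ has distinct $z,z'\in\mathsf Z(a)$ with $\mathsf d(z,z')=d$ not connected by any $(d-1)$-chain. A Krull monoid is a monoid $H$ admitting a divisor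 theory $H_{\mathrm{red}}\hookrightarrow\mathcal F(P)$ into a free abelian monoid (a divisor homomorphism such that every element of $\mathcal F(P)$ is a gcd of finitely many elements of $H_{\mathrm{red}}$); its class group is $\mathsf q(\mathcal F(P))/\mathsf q(H_{\mathrm{red}})$. *)

(* Defs.v *)
From Stdlib Require Import List Permutation Arith.
Import ListNotations.

Record CMon : Type := {
  car :> Type;
  mop : car -> car -> car;
  mone : car;
  mop_assoc : forall a b c, mop a (mop b c) = mop (mop a b) c;
  mop_comm : forall a b, mop a b = mop b a;
  mop_one : forall a, mop mone a = a;
  mop_cancel : forall a b c, mop a b = mop a c -> b = c }.

Definition is_unit (H : CMon) (u : H) : Prop := exists v, mop H u v = mone H.

Definition associated (H : CMon) (a b : H) : Prop :=
  exists e, is_unit H e /\ a = mop H e b.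

Definition mdivides (H : CMon) (a b : H) : Prop := exists c, b = mop H a c.

Definition atom (H : CMon) (u : H) : Prop :=
  ~ is_unit H u /\ forall a b, u = mop H a b -> is_unit H a \/ is_unit H b.

Definition mprod (H : CMon) (l : list H) : H := fold_right (mop H) (mone H) l.

(* An element of the free abelian monoid on A(H_red) is represented by a
   list of atoms of H (representatives of their classes); two lists
   represent the same element iff they agree up to order and associates. *)
Definition fsame (H : CMon) (z z' : list H) : Prop :=
  exists z'', Permutation z' z'' /\ Forall2 (associated H) z z''.

Definition factorization (H : CMon) (a : H) (z : list H) : Prop :=
  Forall (atom H) z /\ associated H (mprod H z) a.

Definition in_L (H : CMon) (a : H) (n : nat) : Prop :=
  exists z, factorization H a z /\ length z = n.

Definition dist (H : CMon) (z z' : list H) (n : nat) : Prop :=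
  exists x y y', fsame H z (x ++ y) /\ fsame H z' (x ++ y') /\
    (forall v w, In v y -> In w y' -> ~ associated H v w) /\
    n = Nat.max (length y) (length y').

Inductive chain (H : CMon) (a : H) (N : nat) : list H -> list H -> Prop :=
| chain_refl : forall z, chain H a N z z
| chain_step : forall z y w, chain H a N z y -> factorization H a w ->
    (exists n, dist H y w n /\ n <= N) -> chain H a N z w.

Definition catenary_degree (H : CMon) (a : H) (N : nat) : Prop :=
  (forall z z', factorization H a z -> factorization H a z' -> chain H a N z z') /\
  (forall M, (forall z z', factorization H a z -> factorization H a z' ->
                chain H a M z z') -> N <= M).

Definition in_Ca (H : CMon) (N : nat) : Prop :=
  exists a, (exists z z', factorization H a z /\ factorization H a z' /\ ~ fsame H z z')
    /\ catenary_degree H a N.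

Definition in_R (H : CMon) (d : nat) : Prop :=
  2 <= d /\ exists a z z', factorization H a z /\ factorization H a z' /\
    ~ fsame H z z' /\ dist H z z' d /\ ~ chain H a (d - 1) z z'.

Definition in_daleth_star (H : CMon) (m : nat) : Prop :=
  exists u v, atom H u /\ atom H v /\
    (exists l1 l2, in_L H (mop H u v) l1 /\ in_L H (mop H u v) l2 /\ l1 <> l2) /\
    in_L H (mop H u v) m /\ m <> 2 /\
    (forall l, in_L H (mop H u v) l -> l <> 2 -> m <= l).

Definition finitely_generated (H : CMon) : Prop :=
  exists gs : list H, forall a, exists l, Forall (fun x => In x gs) l /\ a = mprod H l.

(* Free abelian monoid F(P): finitely supported functions P -> nat. *)
Definition fin_supp {P : Type} (f : P -> nat) : Prop :=
  exists l : list P, forall p, f p <> 0 -> In p l.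

(* phi : H -> F(P) induces a divisor theory H_red -> F(P). *)
Definition divisor_theory (H : CMon) (P : Type) (phi : H -> P -> nat) : Prop :=
  (forall a, fin_supp (phi a)) /\
  (forall p, phi (mone H) p = 0) /\
  (forall a b p, phi (mop H a b) p = phi a p + phi b p) /\
  (forall a b, (forall p, phi a p <= phi b p) -> mdivides H a b) /\
  (* every element of F(P) is a gcd of finitely many elements of the image *)
  (forall f : P -> nat, fin_supp f -> exists l : list H, l <> [] /\
     (forall a, In a l -> forall p, f p <= phi a p) /\
     (forall g : P -> nat, fin_supp g ->
        (forall a, In a l -> forall p, g p <= phi a p) -> forall p, g p <= f p)).

(* The class group q(F(P)) / q(phi(H)) is finite: elements of q(F(P)) are
   differences f - g, and f - g ~ r1 - r2 iff their difference is
   phi(a) - phi(b) for some a, b in H. *)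
Definition class_group_finite (H : CMon) (P : Type) (phi : H -> P -> nat) : Prop :=
  exists reps : list ((P -> nat) * (P -> nat)),
    Forall (fun r => fin_supp (fst r) /\ fin_supp (snd r)) reps /\
    forall f g : P -> nat, fin_supp f -> fin_supp g ->
      exists r, In r reps /\ exists a b : H,
        forall p, f p + snd r p + phi b p = fst r p + g p + phi a p.

Definition krull_finite_class_group (H : CMon) : Prop :=
  exists (P : Type) (phi : H -> P -> nat),
    divisor_theory H P phi /\ class_group_finite H P phi.

(* Main.v *)
Require Import Defs.
From Stdlib Require Import List Arith Lia PeanoNat Permutation.
From Stdlib Require Import FunctionalExtensionality ProofIrrelevance Classical ClassicalEpsilon.
Import ListNotations.

Fixpoint sumn (f : nat -> nat) (n : nat) : nat :=
  match n with 0 => 0 | S n => sumn f n + f n end.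

Lemma sumn_ext f g n : (forall i, i < n -> f i = g i) -> sumn f n = sumn g n.
Proof. induction n; simpl; intros; auto. rewrite IHn, H; auto. Qed.

Lemma sumn_add f g n : sumn (fun i => f i + g i) n = sumn f n + sumn g n.
Proof. induction n; simpl; lia. Qed.

Lemma sumn_single f n j : j < n -> (forall i, i < n -> i <> j -> f i = 0) -> sumn f n = f j.
Proof.
  induction n; simpl; intros. lia.
  destruct (Nat.eq_dec j n).
  - subst. assert (sumn f n = 0). { clear IHn. assert (forall i, i < n -> f i = 0) by (intros; apply H0; lia).
      clear H0 H. induction n; simpl; auto. rewrite IHn, H1; auto. }
    lia.
  - rewrite IHn; [rewrite (H0 n); lia | lia | intros; apply H0; lia].
Qed.

Lemma sumn_le f g n : (forall i, i < n -> f i <= g i) -> sumn f n <= sumn g n.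
Proof. induction n; simpl; intros; auto. specialize (IHn (fun i h => H i (Nat.lt_lt_succ_r _ _ h))). specialize (H n). lia. Qed.

Lemma sumn_lt f g n j : j < n -> (forall i, i < n -> f i <= g i) -> f j < g j -> sumn f n < sumn g n.
Proof.
  induction n; simpl; intros. lia.
  destruct (Nat.eq_dec j n).
  - subst. assert (sumn f n <= sumn g n) by (apply sumn_le; intros; apply H0; lia). lia.
  - assert (sumn f n < sumn g n) by (apply IHn; auto; lia). specialize (H0 n). lia.
Qed.

Lemma sumn_ind_eq n (i : nat) : i < n -> sumn (fun j => if j =? i then 1 else 0) n = 1.
Proof.
  intros. rewrite (sumn_single _ n i); auto. rewrite Nat.eqb_refl; auto.
  intros. destruct (Nat.eqb_spec i0 i); congruence.
Qed.

Definition cong (d a b : nat) := exists m n, a + d*m = b + d*n.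

Lemma cong_sub d a b a' b' : cong d a b -> cong d a' b' -> a' <= a -> b' <= b -> cong d (a - a') (b - b').
Proof. intros [m [n H]] [m' [n' H']] ? ?. exists (m+n'), (n+m'). lia. Qed.

Lemma cong_add d a b a' b' : cong d a b -> cong d a' b' -> cong d (a + a') (b + b').
Proof. intros [m [n H]] [m' [n' H']]. exists (m+m'), (n+n'). lia. Qed.

Lemma lin_step d u w u' w' : 1 <= d -> d*u + w = d*u' + w' -> w' < w -> u + 1 <= u' /\ w' + d <= w.
Proof.
  intros Hd H Hw. destruct (le_lt_dec u' u).
  - assert (d*u' <= d*u) by (apply Nat.mul_le_mono_l; auto). lia.
  - assert (d*u' = d*u + d*(u'-u)) by (rewrite <- Nat.mul_add_distr_l; f_equal; lia).
    assert (d*1 <= d*(u'-u)) by (apply Nat.mul_le_mono_l; lia). lia.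
Qed.

Lemma lin_eq d u w u' : 1 <= d -> d*u + w = d*u' + w -> u = u'.
Proof. intros. assert (d*u = d*u') by lia. apply Nat.mul_cancel_l in H1; lia. Qed.

Lemma cong_0l d b : 1 <= d -> cong d 0 b -> b = 0 \/ d <= b.
Proof.
  intros Hd [m [n H]]. destruct b; auto. right.
  destruct (lin_step d n (S b) m 0) as [_ ?]; auto; lia.
Qed.

Section Constr.
Variable C : list nat.
Hypothesis HC2 : forall d, In d C -> 2 <= d.

Definition D (i : nat) := nth i C 0.
Lemma D_ge2 i : i < length C -> 2 <= D i.
Proof. intros. apply HC2. apply nth_In; auto. Qed.

Definition valid (f : nat -> nat * nat) : Prop :=
  (forall i, length C <= i -> f i = (0,0)) /\
  (forall i, i < length C -> cong (D i) (fst (f i)) (snd (f i))).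

Definition Hc := { f | valid f }.
Definition hval (x : Hc) : nat -> nat * nat := proj1_sig x.

Lemma hext (x y : Hc) : (forall i, hval x i = hval y i) -> x = y.
Proof.
  destruct x as [f hf], y as [g hg]; simpl; intros.
  assert (f = g) by (apply functional_extensionality; auto). subst.
  f_equal; apply proof_irrelevance.
Qed.

Lemma hval_out x i : length C <= i -> hval x i = (0,0).
Proof. destruct x as [f [h1 h2]]; simpl; auto. Qed.
Lemma hval_cong x i : i < length C -> cong (D i) (fst (hval x i)) (snd (hval x i)).
Proof. destruct x as [f [h1 h2]]; simpl; auto. Qed.

Definition padd (u v : nat * nat) := (fst u + fst v, snd u + snd v).

Lemma hop_valid (x y : Hc) : valid (fun i => padd (hval x i) (hval y i)).
Proof.
  split; intros; unfold padd.
  - rewrite !hval_out; auto.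
  - simpl. apply cong_add; apply hval_cong; auto.
Qed.
Definition hop (x y : Hc) : Hc := exist _ _ (hop_valid x y).

Lemma hone_valid : valid (fun _ => (0,0)).
Proof. split; intros; auto. exists 0, 0; simpl; lia. Qed.
Definition hone : Hc := exist _ _ hone_valid.

Lemma hval_op x y i : hval (hop x y) i = (fst (hval x i) + fst (hval y i), snd (hval x i) + snd (hval y i)).
Proof. reflexivity. Qed.
Lemma hval_one i : hval hone i = (0,0).
Proof. reflexivity. Qed.

Ltac hsolve := apply hext; intros; rewrite ?hval_op, ?hval_one; simpl; f_equal; lia.

Definition HM : CMon.
Proof.
  refine {| car := Hc; mop := hop; mone := hone |}.
  - intros; hsolve.
  - intros; hsolve.
  - intros. apply hext; intros. rewrite hval_op, hval_one. destruct (hval a i); reflexivity.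
  - intros a b c H. apply hext; intros i.
    assert (E : hval (hop a b) i = hval (hop a c) i) by (rewrite H; reflexivity). rewrite !hval_op in E.
    destruct (hval b i), (hval c i). inversion E. f_equal; lia.
Defined.

Inductive tag := tU | tV | tW.
Definition cval (d : nat) (t : tag) : nat * nat :=
  match t with tU => (d, 0) | tV => (0, d) | tW => (1, 1) end.

Lemma cval_cong d t : cong d (fst (cval d t)) (snd (cval d t)).
Proof. destruct t; simpl; [exists 0, 1 | exists 1, 0 | exists 0, 0]; lia. Qed.

Definition mkf (F : nat -> nat * nat) : nat -> nat * nat :=
  fun i => if i <? length C then F i else (0,0).
Lemma mk_valid F : (forall i, i < length C -> cong (D i) (fst (F i)) (snd (F i))) -> valid (mkf F).
Proof.
  unfold mkf; split; intros.
  - destruct (Nat.ltb_spec i (length C)); auto; lia.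
  - destruct (Nat.ltb_spec i (length C)); auto; lia.
Qed.
Definition mkH F (pf : forall i, i < length C -> cong (D i) (fst (F i)) (snd (F i))) : Hc :=
  exist _ _ (mk_valid F pf).
Lemma hval_mk F pf i : i < length C -> hval (mkH F pf) i = F i.
Proof. intros. unfold mkH, hval, mkf; simpl. destruct (Nat.ltb_spec i (length C)); auto; lia. Qed.

Definition genF i t := fun j => if j =? i then cval (D i) t else (0,0).
Lemma genF_pf i t : forall j, j < length C -> cong (D j) (fst (genF i t j)) (snd (genF i t j)).
Proof.
  intros. unfold genF. destruct (Nat.eqb_spec j i). subst; apply cval_cong. exists 0, 0; simpl; lia.
Qed.
Definition gen i t : Hc := mkH (genF i t) (genF_pf i t).

Lemma hval_gen i t j : j < length C -> hval (gen i t) j = if j =? i then cval (D i) t else (0,0).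
Proof. intros. unfold gen. rewrite hval_mk; auto. Qed.

Lemma cval_nz d t : 1 <= d -> cval d t <> (0,0).
Proof. destruct t; simpl; intros H E; inversion E; lia. Qed.

Lemma gen_inj i t i' t' : i < length C -> i' < length C -> gen i t = gen i' t' -> i = i' /\ t = t'.
Proof.
  intros Hi Hi' E. assert (E1 : hval (gen i t) i = hval (gen i' t') i) by (rewrite E; reflexivity).
  rewrite !hval_gen, Nat.eqb_refl in E1; auto.
  destruct (Nat.eqb_spec i i').
  - subst. split; auto. assert (2 <= D i') by (apply D_ge2; auto).
    destruct t, t'; simpl in E1; inversion E1; auto; lia.
  - exfalso. apply (cval_nz (D i) t); auto. assert (2 <= D i) by (apply D_ge2; auto). lia.
Qed.


Lemma cong_sym d a b : cong d a b -> cong d b a.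
Proof. intros [m [n H]]; exists n, m; lia. Qed.

Lemma unit_iff x : is_unit HM x <-> x = hone.
Proof.
  split.
  - intros [v Hv]. change (hop x v = hone) in Hv. apply hext; intro i.
    assert (E : hval (hop x v) i = hval hone i) by (rewrite Hv; reflexivity).
    rewrite hval_op, hval_one in E. rewrite hval_one. destruct (hval x i); simpl in *. inversion E; f_equal; lia.
  - intros ->. exists hone. apply hext; intros; reflexivity.
Qed.

Lemma hop_one_l x : hop hone x = x.
Proof. apply hext; intros. rewrite hval_op, hval_one; simpl. destruct (hval x i); reflexivity. Qed.
Lemma hop_one_r x : hop x hone = x.
Proof. apply hext; intros. rewrite hval_op, hval_one; simpl. destruct (hval x i); simpl; f_equal; lia. Qed.

Lemma assoc_iff x y : associated HM x y <-> x = y.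
Proof.
  split.
  - intros [e [He E]]. apply unit_iff in He. rewrite E, He. change (hop hone y = y). apply hop_one_l.
  - intros ->. exists hone. split. apply unit_iff; auto. change (y = hop hone y). now rewrite hop_one_l.
Qed.

Definition isgen (x : Hc) := exists i t, i < length C /\ x = gen i t.

Lemma hone_iff x : x = hone <-> forall i, i < length C -> hval x i = (0,0).
Proof.
  split; intros. subst; reflexivity.
  apply hext; intros. rewrite hval_one. destruct (le_lt_dec (length C) i).
  apply hval_out; auto. auto.
Qed.

Lemma hdiv x y : (forall j, fst (hval y j) <= fst (hval x j) /\ snd (hval y j) <= snd (hval x j)) ->
  exists c, x = hop y c.
Proof.
  intros Hle.
  assert (pf : forall i, i < length C -> cong (D i) (fst ((fun j => (fst (hval x j) - fst (hval y j), snd (hval x j) - snd (hval y j))) i))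
       (snd ((fun j => (fst (hval x j) - fst (hval y j), snd (hval x j) - snd (hval y j))) i))).
  { intros; simpl. apply cong_sub; try apply hval_cong; auto; apply Hle. }
  exists (mkH _ pf). apply hext; intros i. rewrite hval_op.
  destruct (le_lt_dec (length C) i).
  - rewrite !hval_out; auto.
  - rewrite hval_mk; auto. simpl. destruct (Hle i). destruct (hval x i), (hval y i); simpl in *; f_equal; lia.
Qed.

Lemma gen_not_unit i t : i < length C -> ~ is_unit HM (gen i t).
Proof.
  intros Hi Hu. apply unit_iff in Hu. apply hone_iff with (i := i) in Hu; auto.
  rewrite hval_gen, Nat.eqb_refl in Hu; auto. apply (cval_nz (D i) t); auto.
  assert (2 <= D i) by (apply D_ge2; auto). lia.
Qed.

Lemma gen_atom i t : i < length C -> atom HM (gen i t).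
Proof.
  intros Hi. split. apply gen_not_unit; auto.
  intros a b E. change (gen i t = hop a b) in E. rewrite !unit_iff, !hone_iff.
  assert (Ej : forall j, j < length C -> hval (gen i t) j = hval (hop a b) j) by (intros; rewrite E; reflexivity).
  assert (Z : forall j, j < length C -> j <> i -> hval a j = (0,0) /\ hval b j = (0,0)).
  { intros j Hj Hne. specialize (Ej j Hj). rewrite hval_gen, hval_op in Ej; auto.
    destruct (Nat.eqb_spec j i); try congruence. destruct (hval a j), (hval b j); simpl in *; inversion Ej; split; f_equal; lia. }
  assert (Hd : 2 <= D i) by (apply D_ge2; auto).
  specialize (Ej i Hi). rewrite hval_gen, hval_op, Nat.eqb_refl in Ej; auto.
  assert (Ca := hval_cong a i Hi). assert (Cb := hval_cong b i Hi).
  enough (hval a i = (0,0) \/ hval b i = (0,0)) as [Ha|Hb].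
  { left. intros j Hj. destruct (Nat.eq_dec j i). subst; auto. apply Z; auto. }
  { right. intros j Hj. destruct (Nat.eq_dec j i). subst; auto. apply Z; auto. }
  destruct (hval a i) as [a1 a2], (hval b i) as [b1 b2]; simpl in *.
  destruct t; simpl in Ej; inversion Ej.
  - assert (a2 = 0) by lia. assert (b2 = 0) by lia. subst.
    destruct (cong_0l (D i) a1 ltac:(lia) (cong_sym _ _ _ Ca)). left; subst; auto.
    right; f_equal; lia.
  - assert (a1 = 0) by lia. assert (b1 = 0) by lia. subst.
    destruct (cong_0l (D i) a2 ltac:(lia) Ca). left; subst; auto.
    right; f_equal; lia.
  - destruct a1.
    + destruct (cong_0l (D i) a2 ltac:(lia) Ca). left; subst; auto. lia.
    + assert (b1 = 0) by lia. subst. destruct (cong_0l (D i) b2 ltac:(lia) Cb). right; subst; auto. lia.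
Qed.

Lemma pick_gen x : x <> hone -> exists i t, i < length C /\ exists c, x = hop (gen i t) c.
Proof.
  intros Hx. assert (exists i, i < length C /\ hval x i <> (0,0)) as [i [Hi Hne]].
  { apply NNPP; intro N. apply Hx, hone_iff. intros i Hi. apply NNPP; intro N2. apply N; eauto. }
  assert (Hd : 2 <= D i) by (apply D_ge2; auto).
  assert (Cx := hval_cong x i Hi).
  assert (exists t, fst (cval (D i) t) <= fst (hval x i) /\ snd (cval (D i) t) <= snd (hval x i)) as [t Ht].
  { destruct (hval x i) as [a b]; simpl in *.
    destruct a.
    - destruct (cong_0l (D i) b ltac:(lia) Cx). subst; congruence. exists tV; simpl; lia.
    - destruct b.
      + destruct (cong_0l (D i) (S a) ltac:(lia) (cong_sym _ _ _ Cx)). lia. exists tU; simpl; lia.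
      + exists tW; simpl; lia. }
  exists i, t. split; auto. apply hdiv. intros j.
  destruct (le_lt_dec (length C) j).
  - rewrite !hval_out; auto.
  - rewrite hval_gen; auto. destruct (Nat.eqb_spec j i). subst; auto. simpl; lia.
Qed.

Lemma atom_iff x : atom HM x <-> isgen x.
Proof.
  split.
  - intros [Hnu Hat]. assert (x <> hone) by (intro; subst; apply Hnu, unit_iff; auto).
    destruct (pick_gen x H) as [i [t [Hi [c Hc]]]].
    destruct (Hat _ _ Hc) as [Hu|Hu]. exfalso; apply (gen_not_unit i t); auto.
    apply unit_iff in Hu. subst. rewrite hop_one_r. exists i, t; auto.
  - intros [i [t [Hi ->]]]. apply gen_atom; auto.
Qed.


Definition heq_dec (x y : Hc) : {x = y} + {x <> y} := excluded_middle_informative (x = y).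
Definition cnt (z : list Hc) j t := count_occ heq_dec z (gen j t).

Definition tageqb (t t' : tag) : bool :=
  match t, t' with tU, tU | tV, tV | tW, tW => true | _, _ => false end.

Lemma gen_ind i t j t' : i < length C -> j < length C ->
  (if heq_dec (gen i t) (gen j t') then 1 else 0) = if i =? j then (if tageqb t t' then 1 else 0) else 0.
Proof.
  intros Hi Hj. destruct (heq_dec (gen i t) (gen j t')) as [E|E].
  - apply gen_inj in E; auto. destruct E; subst. rewrite Nat.eqb_refl. destruct t'; reflexivity.
  - destruct (Nat.eqb_spec i j); auto. subst. destruct t, t'; simpl; auto; exfalso; apply E; reflexivity.
Qed.

Lemma cnt_cons x z j t : cnt (x :: z) j t = (if heq_dec x (gen j t) then 1 else 0) + cnt z j t.
Proof. unfold cnt; simpl. destruct (heq_dec x (gen j t)); lia. Qed.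

Lemma cnt_gen_cons i t z j t' : i < length C -> j < length C ->
  cnt (gen i t :: z) j t' = (if i =? j then (if tageqb t t' then 1 else 0) else 0) + cnt z j t'.
Proof. intros. rewrite cnt_cons, gen_ind; auto. Qed.

Lemma cnt_app z1 z2 j t : cnt (z1 ++ z2) j t = cnt z1 j t + cnt z2 j t.
Proof. unfold cnt; apply count_occ_app. Qed.

Lemma cnt_nil j t : cnt [] j t = 0.
Proof. reflexivity. Qed.

Lemma cnt_perm z z' j t : Permutation z z' -> cnt z j t = cnt z' j t.
Proof. intros. unfold cnt. apply Permutation_count_occ; auto. Qed.

Lemma mprod_val z j : Forall isgen z -> j < length C ->
  hval (mprod HM z) j = (D j * cnt z j tU + cnt z j tW, D j * cnt z j tV + cnt z j tW).
Proof.
  intros Hz Hj. induction Hz as [|x z Hx Hz IH].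
  - change (hval hone j = (D j * cnt [] j tU + cnt [] j tW, D j * cnt [] j tV + cnt [] j tW)). rewrite hval_one. unfold cnt; simpl. f_equal; lia.
  - destruct Hx as [i [t [Hi ->]]]. change (hval (hop (gen i t) (mprod HM z)) j = (D j * cnt (gen i t :: z) j tU + cnt (gen i t :: z) j tW, D j * cnt (gen i t :: z) j tV + cnt (gen i t :: z) j tW)).
    rewrite hval_op, IH, !cnt_gen_cons, hval_gen; auto.
    destruct (Nat.eqb_spec j i); destruct (Nat.eqb_spec i j); try lia.
    + subst. destruct t; simpl; f_equal; lia.
    + simpl; f_equal; lia.
Qed.

Lemma length_cnt z : Forall isgen z ->
  length z = sumn (fun j => cnt z j tU + cnt z j tV + cnt z j tW) (length C).
Proof.
  intros Hz. induction Hz as [|x z Hx Hz IH].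
  - simpl. unfold cnt; simpl. clear. induction (length C); simpl; lia.
  - destruct Hx as [i [t [Hi ->]]]. simpl length. rewrite IH.
    transitivity (sumn (fun j => (if j =? i then 1 else 0) + (cnt z j tU + cnt z j tV + cnt z j tW)) (length C)).
    + rewrite (sumn_add (fun j => if j =? i then 1 else 0) (fun j => cnt z j tU + cnt z j tV + cnt z j tW)), sumn_ind_eq; auto.
    + apply sumn_ext. intros j Hj. rewrite !cnt_gen_cons; auto. rewrite (Nat.eqb_sym i j).
      destruct (j =? i); destruct t; simpl; lia.
Qed.

Lemma perm_crit z z' : Forall isgen z -> Forall isgen z' ->
  (forall j t, j < length C -> cnt z j t = cnt z' j t) -> Permutation z z'.
Proof.
  intros Hz Hz' E. apply (Permutation_count_occ heq_dec). intros x.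
  destruct (classic (isgen x)) as [[i [t [Hi ->]]]|N].
  - apply E; auto.
  - rewrite (proj1 (count_occ_not_In heq_dec z x)), (proj1 (count_occ_not_In heq_dec z' x)); auto.
    + intro Hin. rewrite Forall_forall in Hz'. apply N, Hz'; auto.
    + intro Hin. rewrite Forall_forall in Hz. apply N, Hz; auto.
Qed.

Lemma fact_iff a z : factorization HM a z <-> Forall isgen z /\ mprod HM z = a.
Proof.
  unfold factorization. rewrite assoc_iff. split; intros [H1 H2]; split; auto;
  eapply Forall_impl; try eassumption; intros; apply atom_iff; auto.
Qed.

Lemma Forall2_assoc_eq z z' : Forall2 (associated HM) z z' -> z = z'.
Proof. induction 1; auto. apply assoc_iff in H. congruence. Qed.

Lemma fsame_iff z z' : fsame HM z z' <-> Permutation z' z.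
Proof.
  split.
  - intros [z'' [P F]]. apply Forall2_assoc_eq in F. subst; auto.
  - intros P. exists z. split; auto. clear. induction z; constructor; auto. apply assoc_iff; auto.
Qed.

Lemma fact_vals a z j : factorization HM a z -> j < length C ->
  hval a j = (D j * cnt z j tU + cnt z j tW, D j * cnt z j tV + cnt z j tW).
Proof. intros [Hz Ha]%fact_iff Hj. subst. apply mprod_val; auto. Qed.

Lemma fact_W_perm a z z' : factorization HM a z -> factorization HM a z' ->
  (forall j, j < length C -> cnt z j tW = cnt z' j tW) -> Permutation z z'.
Proof.
  intros F F' E. apply perm_crit. apply fact_iff in F; tauto. apply fact_iff in F'; tauto.
  intros j t Hj. assert (V := fact_vals _ _ j F Hj). rewrite (fact_vals _ _ j F' Hj) in V.
  assert (2 <= D j) by (apply D_ge2; auto). specialize (E j Hj). inversion V.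
  destruct t; auto.
  - rewrite ?E in H1. symmetry; eapply lin_eq; [|exact H1]; lia.
  - rewrite ?E in H2. symmetry; eapply lin_eq; [|exact H2]; lia.
Qed.


Lemma cnt_le_length z j t : cnt z j t <= length z.
Proof. induction z; simpl. unfold cnt; simpl; lia. rewrite cnt_cons. destruct heq_dec; lia. Qed.

Lemma dist_unfold y w n : dist HM y w n -> exists x Y Y', Permutation (x ++ Y) y /\ Permutation (x ++ Y') w /\
  (forall v u, In v Y -> In u Y' -> v <> u) /\ n = Nat.max (length Y) (length Y').
Proof.
  intros [x [Y [Y' [F1 [F2 [Dj En]]]]]]. apply fsame_iff in F1, F2.
  exists x, Y, Y'. repeat split; auto. intros v u Hv Hu E. apply (Dj v u Hv Hu). apply assoc_iff; auto.
Qed.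

Lemma dist_lb a y w n j : factorization HM a y -> factorization HM a w -> dist HM y w n ->
  j < length C -> cnt y j tW <> cnt w j tW -> D j <= n.
Proof.
  intros Fy Fw Dd Hj Ne. apply dist_unfold in Dd as [x [Y [Y' [P1 [P2 [_ En]]]]]].
  assert (Vy := fact_vals _ _ j Fy Hj). rewrite (fact_vals _ _ j Fw Hj) in Vy. injection Vy as E1 E2.
  assert (2 <= D j) by (apply D_ge2; auto).
  assert (Cy : cnt y j tW = cnt x j tW + cnt Y j tW) by (rewrite <- cnt_app; apply cnt_perm; symmetry; auto).
  assert (Cw : cnt w j tW = cnt x j tW + cnt Y' j tW) by (rewrite <- cnt_app; apply cnt_perm; symmetry; auto).
  assert (L1 := cnt_le_length Y j tW). assert (L2 := cnt_le_length Y' j tW).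
  assert (length (A:=Hc) Y <= n /\ length (A:=Hc) Y' <= n) by (subst; split; [apply Nat.le_max_l|apply Nat.le_max_r]).
  destruct (proj1 (Nat.lt_gt_cases _ _) Ne) as [Hl|Hl].
  - destruct (lin_step (D j) (cnt w j tU) (cnt w j tW) (cnt y j tU) (cnt y j tW)); try lia.
  - destruct (lin_step (D j) (cnt y j tU) (cnt y j tW) (cnt w j tU) (cnt w j tW)); try lia.
Qed.

Lemma chain_trans a N z y w : chain HM a N z y -> chain HM a N y w -> chain HM a N z w.
Proof. intros H1 H2. induction H2; auto. eapply chain_step; [apply IHchain; auto | auto | auto]. Qed.

Lemma chain_fact a N z w : chain HM a N z w -> factorization HM a z -> factorization HM a w.
Proof. induction 1; auto. Qed.

Lemma chain_one a N y w n : factorization HM a w -> dist HM y w n -> n <= N -> chain HM a N y w.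
Proof. intros. eapply chain_step. apply chain_refl. auto. eauto. Qed.

Lemma chain_lower a N z w : chain HM a N z w -> factorization HM a z ->
  forall j, j < length C -> cnt z j tW <> cnt w j tW -> D j <= N.
Proof.
  induction 1 as [|z y w Ch IH Fw [n [Dn Hn]]]; intros Fz j Hj Ne. congruence.
  destruct (Nat.eq_dec (cnt z j tW) (cnt y j tW)).
  - assert (D j <= n); [|lia]. apply (dist_lb a y w n j); auto. eapply chain_fact; eauto. congruence.
  - apply IH; auto.
Qed.

Lemma dist_perm y w : Permutation y w -> dist HM y w 0.
Proof.
  intros P. exists w, [], []. rewrite !app_nil_r. repeat split.
  apply fsame_iff; symmetry; auto. apply fsame_iff; auto. intros v u [].
Qed.

Lemma mprod_app l1 l2 : mprod HM (l1 ++ l2) = hop (mprod HM l1) (mprod HM l2).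
Proof.
  induction l1; simpl. symmetry; apply hop_one_l.
  change (hop a (mprod HM (l1 ++ l2)) = hop (hop a (mprod HM l1)) (mprod HM l2)).
  rewrite IHl1. apply (mop_assoc HM).
Qed.

Lemma mprod_perm l1 l2 : Permutation l1 l2 -> mprod HM l1 = mprod HM l2.
Proof.
  induction 1; simpl; auto.
  - rewrite IHPermutation; auto.
  - rewrite !(mop_assoc HM). rewrite (mop_comm HM y x). auto.
  - congruence.
Qed.

Lemma exchange a z Y Y' rest : factorization HM a z -> Permutation z (Y ++ rest) -> Forall isgen Y' ->
  mprod HM Y = mprod HM Y' -> (forall v u, In v Y -> In u Y' -> v <> u) ->
  factorization HM a (Y' ++ rest) /\ dist HM z (Y' ++ rest) (Nat.max (length Y) (length Y')).
Proof.
  intros Fz P GY' EY Dj. apply fact_iff in Fz as [Gz Ez]. split.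
  - apply fact_iff. split.
    + apply Forall_app. split; auto. rewrite Forall_forall in *. intros x Hx. apply Gz.
      apply (Permutation_in x (Permutation_sym P)). apply in_or_app; auto.
    + rewrite <- Ez, (mprod_perm _ _ P), !mprod_app, EY; auto.
  - exists rest, Y, Y'. repeat split.
    + apply fsame_iff. rewrite P. apply Permutation_app_comm.
    + apply fsame_iff. apply Permutation_app_comm.
    + intros v u Hv Hu E. apply assoc_iff in E. eapply Dj; eauto.
Qed.

Lemma extract z j t n : n <= cnt z j t -> exists rest, Permutation z (repeat (gen j t) n ++ rest).
Proof.
  revert z; induction n; intros z Hn. exists z; auto.
  assert (Hin : In (gen j t) z) by (apply (count_occ_In heq_dec); unfold cnt in Hn; lia).
  apply in_split in Hin as [l1 [l2 ->]].
  assert (cnt (l1 ++ gen j t :: l2) j t = S (cnt (l1 ++ l2) j t)).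
  { rewrite !cnt_app, cnt_cons. destruct heq_dec; try congruence. lia. }
  destruct (IHn (l1 ++ l2)) as [rest Pr]. lia.
  exists rest. simpl. rewrite <- Pr. symmetry. apply Permutation_middle.
Qed.

Lemma cnt_repeat i t n j t' : i < length C -> j < length C ->
  cnt (repeat (gen i t) n) j t' = if i =? j then (if tageqb t t' then n else 0) else 0.
Proof.
  intros. induction n; simpl. destruct (i =? j), (tageqb t t'); reflexivity.
  rewrite cnt_gen_cons, IHn; auto. destruct (i =? j), (tageqb t t'); lia.
Qed.

Lemma isgen_gen i t : i < length C -> isgen (gen i t).
Proof. intros; exists i, t; auto. Qed.

Lemma Forall_repeat_gen i t n : i < length C -> Forall isgen (repeat (gen i t) n).
Proof. intros. apply Forall_forall. intros x Hx. apply repeat_spec in Hx. subst. apply isgen_gen; auto. Qed.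

Lemma UV_W j : j < length C -> mprod HM [gen j tU; gen j tV] = mprod HM (repeat (gen j tW) (D j)).
Proof.
  intros Hj. apply hext; intros i. destruct (le_lt_dec (length C) i). rewrite !hval_out; auto.
  rewrite !mprod_val; auto.
  - rewrite !cnt_gen_cons, !cnt_repeat; auto. repeat rewrite cnt_nil. destruct (Nat.eqb_spec j i); [subst|]; simpl; f_equal; lia.
  - apply Forall_repeat_gen; auto.
  - repeat constructor; apply isgen_gen; auto.
Qed.

Lemma gen_neq i t t' : i < length C -> t <> t' -> gen i t <> gen i t'.
Proof. intros Hi Ht E. apply gen_inj in E; tauto. Qed.


Definition meas (z z' : list Hc) :=
  sumn (fun j => (cnt z j tW - cnt z' j tW) + (cnt z' j tW - cnt z j tW)) (length C).

Lemma disj_W_UV j v u : j < length C -> In v (repeat (gen j tW) (D j)) -> In u [gen j tU; gen j tV] -> v <> u.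
Proof.
  intros Hj Hv Hu. apply repeat_spec in Hv. subst. destruct Hu as [<-|[<-|[]]]; apply gen_neq; auto; discriminate.
Qed.

Lemma step_exists a N z z' j : factorization HM a z -> factorization HM a z' -> j < length C ->
  cnt z j tW <> cnt z' j tW -> D j <= N ->
  exists z1, factorization HM a z1 /\ chain HM a N z z1 /\ meas z1 z' < meas z z' /\
    (forall j', j' < length C -> j' <> j -> cnt z1 j' tW = cnt z j' tW).
Proof.
  intros Fz Fz' Hj Ne HN.
  assert (Vz := fact_vals _ _ j Fz Hj). rewrite (fact_vals _ _ j Fz' Hj) in Vz. injection Vz as E1 E2.
  assert (Hd : 2 <= D j) by (apply D_ge2; auto).
  assert (GUV : Forall isgen [gen j tU; gen j tV]) by (repeat constructor; apply isgen_gen; auto).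
  assert (Mx : Nat.max (D j) 2 = D j) by (apply Nat.max_l; lia).
  assert (Mx' : Nat.max 2 (D j) = D j) by (apply Nat.max_r; lia).
  destruct (proj1 (Nat.lt_gt_cases _ _) Ne) as [Hl|Hl].
  - (* z has fewer W: replace U V by W^d *)
    destruct (lin_step (D j) (cnt z' j tU) (cnt z' j tW) (cnt z j tU) (cnt z j tW)) as [HU HW]; try lia.
    destruct (lin_step (D j) (cnt z' j tV) (cnt z' j tW) (cnt z j tV) (cnt z j tW)) as [HV _]; try lia.
    destruct (extract z j tU 1) as [r1 P1]; [lia|].
    destruct (extract r1 j tV 1) as [rest P2].
    { assert (Q : cnt z j tV = cnt (repeat (gen j tU) 1 ++ r1) j tV) by (apply cnt_perm; auto).
      rewrite cnt_app, cnt_repeat, Nat.eqb_refl in Q; auto. simpl in Q. lia. }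
    assert (P : Permutation z ([gen j tU; gen j tV] ++ rest)) by (rewrite P1; simpl; constructor; exact P2).
    assert (DJ : forall v u, In v [gen j tU; gen j tV] -> In u (repeat (gen j tW) (D j)) -> v <> u).
    { intros v u Hv Hu E. apply (disj_W_UV j u v Hj); auto. }
    destruct (exchange a z _ _ rest Fz P (Forall_repeat_gen j tW (D j) Hj) (UV_W j Hj) DJ) as [F1 D1].
    exists (repeat (gen j tW) (D j) ++ rest). split; auto. split.
    { eapply chain_one; eauto. simpl length. rewrite repeat_length, Mx'; auto. }
    assert (CW : forall j', j' < length C -> cnt (repeat (gen j tW) (D j) ++ rest) j' tW = (if j =? j' then D j else 0) + cnt rest j' tW).
    { intros. rewrite cnt_app, cnt_repeat; auto. }
    assert (CZ : forall j', j' < length C -> cnt z j' tW = cnt rest j' tW).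
    { intros. rewrite (cnt_perm _ _ _ _ P), cnt_app, !cnt_gen_cons; auto. rewrite cnt_nil. destruct (j =? j'); simpl; lia. }
    rewrite CZ in Hl, HW; auto.
    split.
    + unfold meas. apply (sumn_lt _ _ _ j); auto.
      * intros j' Hj'. rewrite CW, CZ; auto. destruct (Nat.eqb_spec j j'); [subst|]; lia.
      * rewrite CW, CZ, Nat.eqb_refl; auto. lia.
    + intros j' Hj' Hne. rewrite CW, CZ; auto. destruct (Nat.eqb_spec j j'); [congruence|]; lia.
  - (* z has more W: replace W^d by U V *)
    destruct (lin_step (D j) (cnt z j tU) (cnt z j tW) (cnt z' j tU) (cnt z' j tW)) as [_ HW]; try lia.
    destruct (extract z j tW (D j)) as [rest P]; [lia|].
    destruct (exchange a z _ _ rest Fz P GUV (eq_sym (UV_W j Hj)) (fun v u => disj_W_UV j v u Hj)) as [F1 D1].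
    exists ([gen j tU; gen j tV] ++ rest). split; auto. split.
    { eapply chain_one; eauto. simpl length. rewrite repeat_length, Mx; auto. }
    assert (CW : forall j', j' < length C -> cnt ([gen j tU; gen j tV] ++ rest) j' tW = cnt rest j' tW).
    { intros. rewrite cnt_app, !cnt_gen_cons; auto. rewrite cnt_nil. destruct (j =? j'); simpl; lia. }
    assert (CZ : forall j', j' < length C -> cnt z j' tW = (if j =? j' then D j else 0) + cnt rest j' tW).
    { intros. rewrite (cnt_perm _ _ _ _ P), cnt_app, cnt_repeat; auto. }
    rewrite CZ, Nat.eqb_refl in Hl, HW; auto.
    split.
    + unfold meas. apply (sumn_lt _ _ _ j); auto.
      * intros j' Hj'. rewrite CW, CZ; auto. destruct (Nat.eqb_spec j j'); [subst|]; lia.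
      * rewrite CW, CZ, Nat.eqb_refl; auto. lia.
    + intros j' Hj' Hne. rewrite CW, CZ; auto. destruct (Nat.eqb_spec j j'); [congruence|]; lia.
Qed.

Lemma chain_upper a N : forall m z z', meas z z' <= m -> factorization HM a z -> factorization HM a z' ->
  (forall j, j < length C -> cnt z j tW <> cnt z' j tW -> D j <= N) -> chain HM a N z z'.
Proof.
  induction m; intros z z' Hm Fz Fz' HN;
  (destruct (classic (exists j, j < length C /\ cnt z j tW <> cnt z' j tW)) as [[j [Hj Ne]]|NE];
    [|apply (chain_one a N z z' 0); auto; [|lia]; apply dist_perm; apply (fact_W_perm a); auto;
      intros j Hj; apply NNPP; intro; apply NE; eauto]).
  - exfalso. assert (0 < meas z z'); [|lia]. unfold meas.
    apply (Nat.le_lt_trans _ (sumn (fun _ => 0) (length C))). clear; induction (length C); simpl; lia.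
    apply (sumn_lt _ _ _ j); auto; intros; lia.
  - destruct (step_exists a N z z' j Fz Fz' Hj Ne (HN j Hj Ne)) as [z1 [F1 [Ch [Lt Eq]]]].
    eapply chain_trans; [exact Ch|]. apply IHm; auto. lia.
    intros j' Hj' Ne'. apply HN; auto. destruct (Nat.eq_dec j' j). subst; auto. rewrite <- Eq; auto.
Qed.


Lemma sumn_ge f n j : j < n -> f j <= sumn f n.
Proof. induction n; simpl; intros. lia. destruct (Nat.eq_dec j n). subst; lia. assert (f j <= sumn f n) by (apply IHn; lia). lia. Qed.

Lemma sumn_ge2 f n j j' : j < n -> j' < n -> j <> j' -> f j + f j' <= sumn f n.
Proof.
  induction n; simpl; intros. lia.
  destruct (Nat.eq_dec j n). subst. assert (f j' <= sumn f n) by (apply sumn_ge; lia). lia.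
  destruct (Nat.eq_dec j' n). subst. assert (f j <= sumn f n) by (apply sumn_ge; lia). lia.
  assert (f j + f j' <= sumn f n) by (apply IHn; lia). lia.
Qed.

Lemma nth_D_In j : j < length C -> In (D j) C.
Proof. intros. apply nth_In; auto. Qed.

Lemma In_D d : In d C -> exists i, i < length C /\ D i = d.
Proof. intros H. apply In_nth with (d := 0) in H. destruct H as [i [Hi E]]. exists i; auto. Qed.

Definition aUV i := hop (gen i tU) (gen i tV).

Lemma mprod_pair u v : mprod HM [u; v] = hop u v.
Proof. change (hop u (hop v hone) = hop u v). rewrite hop_one_r; auto. Qed.

Lemma fact_UV i : i < length C -> factorization HM (aUV i) [gen i tU; gen i tV].
Proof. intros. apply fact_iff. split. repeat constructor; apply isgen_gen; auto. apply mprod_pair. Qed.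

Lemma fact_W i : i < length C -> factorization HM (aUV i) (repeat (gen i tW) (D i)).
Proof. intros. apply fact_iff. split. apply Forall_repeat_gen; auto. rewrite <- UV_W; auto. apply mprod_pair. Qed.

Lemma cW_UV i j : i < length C -> j < length C -> cnt [gen i tU; gen i tV] j tW = 0.
Proof. intros. rewrite !cnt_gen_cons, cnt_nil; auto. destruct (i =? j); auto. Qed.

Lemma cW_W i : i < length C -> cnt (repeat (gen i tW) (D i)) i tW = D i.
Proof. intros. rewrite cnt_repeat, Nat.eqb_refl; auto. Qed.

Lemma not_fsame_UV_W i : i < length C -> ~ fsame HM [gen i tU; gen i tV] (repeat (gen i tW) (D i)).
Proof.
  intros Hi F. apply fsame_iff in F. apply (cnt_perm _ _ i tU) in F.
  rewrite cnt_repeat, !cnt_gen_cons, Nat.eqb_refl, cnt_nil in F; auto. simpl in F. lia.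
Qed.

Lemma dist_UV_W i : i < length C -> dist HM [gen i tU; gen i tV] (repeat (gen i tW) (D i)) (D i).
Proof.
  intros Hi. exists [], [gen i tU; gen i tV], (repeat (gen i tW) (D i)). simpl app. repeat split.
  - apply fsame_iff; auto.
  - apply fsame_iff; auto.
  - intros v w Hv Hw E. apply assoc_iff in E. apply (disj_W_UV i w v Hi); auto.
  - simpl length. rewrite repeat_length. symmetry; apply Nat.max_r. assert (2 <= D i) by (apply D_ge2; auto). lia.
Qed.

Lemma aUV_other i z j : i < length C -> j < length C -> j <> i -> factorization HM (aUV i) z -> cnt z j tW = 0.
Proof.
  intros Hi Hj Hne F. assert (V := fact_vals _ _ j F Hj). unfold aUV in V.
  rewrite hval_op, !hval_gen in V; auto. destruct (Nat.eqb_spec j i); try congruence. simpl in V.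
  injection V as V1 V2. lia.
Qed.

Lemma cW_differ_W_UV i : i < length C -> cnt [gen i tU; gen i tV] i tW <> cnt (repeat (gen i tW) (D i)) i tW.
Proof. intros. rewrite cW_UV, cW_W; auto. assert (2 <= D i) by (apply D_ge2; auto). lia. Qed.

Lemma R_iff d : in_R HM d <-> In d C.
Proof.
  split.
  - intros [H2 [a [z [z' [Fz [Fz' [Nf [Dd Nch]]]]]]]].
    destruct (classic (exists j, j < length C /\ cnt z j tW <> cnt z' j tW /\ d <= D j)) as [[j [Hj [Ne Le]]]|NE].
    + assert (D j <= d) by (apply (dist_lb a z z' d j); auto). replace d with (D j) by lia. apply nth_D_In; auto.
    + exfalso. apply Nch. apply (chain_upper a (d-1) (meas z z')); auto.
      intros j Hj Ne. destruct (le_lt_dec d (D j)). exfalso; apply NE; eauto. lia.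
  - intros Hin. destruct (In_D d Hin) as [i [Hi <-]]. split. apply D_ge2; auto.
    exists (aUV i), [gen i tU; gen i tV], (repeat (gen i tW) (D i)).
    split; [apply fact_UV; auto|]. split; [apply fact_W; auto|]. split; [apply not_fsame_UV_W; auto|].
    split; [apply dist_UV_W; auto|].
    intro Ch. apply chain_lower with (j := i) in Ch; auto. assert (2 <= D i) by (apply D_ge2; auto). lia.
    apply fact_UV; auto. apply cW_differ_W_UV; auto.
Qed.

Lemma Ca_iff d : in_Ca HM d <-> In d C.
Proof.
  split.
  - intros [a [[z0 [z0' [F0 [F0' Nf]]]] [Hall Hmin]]].
    assert (exists j0, j0 < length C /\ cnt z0 j0 tW <> cnt z0' j0 tW) as [j0 [Hj0 Ne0]].
    { apply NNPP; intro NE. apply Nf. apply fsame_iff. symmetry. apply (fact_W_perm a); auto.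
      intros j Hj. apply NNPP; intro; apply NE; eauto. }
    assert (D j0 <= d) by (apply (chain_lower a d z0 z0'); auto).
    assert (2 <= D j0) by (apply D_ge2; auto).
    destruct (classic (exists j, j < length C /\ (exists z z', factorization HM a z /\ factorization HM a z' /\ cnt z j tW <> cnt z' j tW) /\ d <= D j))
      as [[j [Hj [[z [z' [Fz [Fz' Ne]]]] Le]]]|NE].
    + assert (D j <= d) by (apply (chain_lower a d z z'); auto). replace d with (D j) by lia. apply nth_D_In; auto.
    + exfalso. assert (d <= d - 1); [|lia]. apply Hmin. intros z z' Fz Fz'.
      apply (chain_upper a (d-1) (meas z z')); auto. intros j Hj Ne.
      destruct (le_lt_dec d (D j)). exfalso; apply NE. exists j; split; auto. split; auto. exists z, z'; auto. lia.
  - intros Hin. destruct (In_D d Hin) as [i [Hi <-]]. exists (aUV i). split.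
    + exists [gen i tU; gen i tV], (repeat (gen i tW) (D i)). split. apply fact_UV; auto. split. apply fact_W; auto.
      apply not_fsame_UV_W; auto.
    + split.
      * intros z z' Fz Fz'. apply (chain_upper _ _ (meas z z')); auto. intros j Hj Ne.
        destruct (Nat.eq_dec j i). subst; auto.
        rewrite !(aUV_other i _ j) in Ne; auto. congruence.
      * intros M HM'. apply (chain_lower (aUV i) M [gen i tU; gen i tV] (repeat (gen i tW) (D i)));
        [apply HM'; [apply fact_UV|apply fact_W]; auto | apply fact_UV; auto | auto | apply cW_differ_W_UV; auto].
Qed.

Definition ell (z : list Hc) j := cnt z j tU + cnt z j tV + cnt z j tW.

Lemma core u v (z : list Hc) : isgen u -> isgen v -> factorization HM (hop u v) z -> length z <> 2 ->
  exists j, j < length C /\ length z = D j /\ cnt [u; v] j tU = 1.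
Proof.
  intros Gu Gv Fz Hl.
  assert (F0 : factorization HM (hop u v) [u; v]) by (apply fact_iff; split; [repeat constructor; auto | apply mprod_pair]).
  assert (G0 : Forall isgen [u;v]) by (apply fact_iff in F0; tauto).
  assert (Gz : Forall isgen z) by (apply fact_iff in Fz; tauto).
  assert (L0 := length_cnt _ G0). assert (Lz := length_cnt _ Gz). simpl length in L0.
  assert (exists j, j < length C /\ ell z j <> ell [u;v] j) as [j [Hj Ne]].
  { apply NNPP; intro NE. apply Hl. rewrite Lz, L0. apply sumn_ext. intros j Hj. apply NNPP; intro; apply NE.
    exists j; split; auto. }
  unfold ell in Ne.
  assert (V := fact_vals _ _ j Fz Hj). rewrite (fact_vals _ _ j F0 Hj) in V. injection V as E1 E2.
  assert (Hd : 2 <= D j) by (apply D_ge2; auto).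
  assert (NW : cnt z j tW <> cnt [u;v] j tW).
  { intro EW. rewrite EW in E1, E2. apply lin_eq in E1; [|lia]. apply lin_eq in E2; [|lia]. lia. }
  assert (Hd3 : D j <> 2).
  { intro E. rewrite E in E1, E2. apply Ne. lia. }
  assert (B0 : ell [u;v] j <= 2) by (rewrite L0; apply (sumn_ge (ell [u;v])); auto).
  unfold ell in B0.
  destruct (proj1 (Nat.lt_gt_cases _ _) NW) as [Hlt|Hgt].
  - destruct (lin_step (D j) (cnt [u;v] j tU) (cnt [u;v] j tW) (cnt z j tU) (cnt z j tW)); lia.
  - destruct (lin_step (D j) (cnt z j tU) (cnt z j tW) (cnt [u;v] j tU) (cnt [u;v] j tW)) as [HU _]; try lia.
    destruct (lin_step (D j) (cnt z j tV) (cnt z j tW) (cnt [u;v] j tV) (cnt [u;v] j tW)) as [HV _]; try lia.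
    assert (O0 : forall j', j' < length C -> j' <> j -> ell [u;v] j' = 0).
    { intros j' Hj' Hne. assert (ell [u;v] j + ell [u;v] j' <= 2) by (rewrite L0; apply sumn_ge2; auto).
      unfold ell in *. lia. }
    assert (Oz : forall j', j' < length C -> j' <> j -> ell z j' = 0).
    { intros j' Hj' Hne. specialize (O0 j' Hj' Hne). unfold ell in *.
      assert (V' := fact_vals _ _ j' Fz Hj'). rewrite (fact_vals _ _ j' F0 Hj') in V'. injection V' as E1' E2'.
      assert (2 <= D j') by (apply D_ge2; auto).
      assert (cnt [u;v] j' tU = 0) by lia. assert (cnt [u;v] j' tV = 0) by lia. assert (cnt [u;v] j' tW = 0) by lia.
      rewrite H, H0, H1 in *. rewrite Nat.mul_0_r in *. simpl in E1', E2'.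
      assert (cnt z j' tU = 0). { destruct (cnt z j' tU); auto. rewrite Nat.mul_succ_r in E1'. lia. }
      assert (cnt z j' tV = 0). { destruct (cnt z j' tV); auto. rewrite Nat.mul_succ_r in E2'. lia. }
      lia. }
    exists j. split; auto. split; [|lia].
    rewrite Lz. rewrite (sumn_single (ell z) _ j); auto. assert (cnt z j tU = 0) by lia. assert (cnt z j tV = 0) by lia.
    assert (cnt [u;v] j tU = 1) by lia. assert (cnt [u;v] j tW = 0) by lia.
    unfold ell. rewrite H, H0, H1, H2 in *. rewrite Nat.mul_0_r, Nat.mul_1_r in E1. lia.
Qed.

Lemma daleth_iff d : in_daleth_star HM d <-> (In d C /\ d <> 2).
Proof.
  split.
  - intros [u [v [Au [Av [_ [[z [Fz Lz]] [Hd _]]]]]]].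
    change (length (A:=Hc) z = d) in Lz.
    apply atom_iff in Au, Av. destruct (core u v z Au Av Fz) as [j [Hj [E _]]]. lia.
    split; auto. subst. rewrite E. apply nth_D_In; auto.
  - intros [Hin Hd]. destruct (In_D d Hin) as [i [Hi <-]].
    exists (gen i tU), (gen i tV). split. apply gen_atom; auto. split. apply gen_atom; auto.
    assert (L2 : in_L HM (mop HM (gen i tU) (gen i tV)) 2) by (exists [gen i tU; gen i tV]; split; [apply fact_UV|]; auto).
    assert (LD : in_L HM (mop HM (gen i tU) (gen i tV)) (D i)).
    { exists (repeat (gen i tW) (D i)). split. apply fact_W; auto. apply repeat_length. }
    split. exists 2, (D i). auto. split; auto. split; auto.
    intros l [z [Fz Lz]] Hl. change (length (A:=Hc) z = l) in Lz. subst l.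
    destruct (core (gen i tU) (gen i tV) z (isgen_gen i tU Hi) (isgen_gen i tV Hi) Fz Hl) as [j [Hj [E C1]]].
    rewrite !cnt_gen_cons, cnt_nil in C1; auto. destruct (Nat.eqb_spec i j). subst; lia. simpl in C1. lia.
Qed.


Definition hsize (x : Hc) := sumn (fun i => fst (hval x i) + snd (hval x i)) (length C).

Lemma factor_exists : forall n a, hsize a <= n -> exists z, Forall isgen z /\ mprod HM z = a.
Proof.
  induction n; intros a Ha;
  (destruct (classic (a = hone)) as [->|Na]; [exists []; split; auto|]);
  destruct (pick_gen a Na) as [i [t [Hi [c ->]]]];
  assert (Hs : hsize (hop (gen i t) c) = hsize (gen i t) + hsize c) by
    (unfold hsize; rewrite <- sumn_add; apply sumn_ext; intros; rewrite hval_op; simpl; lia);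
  assert (Hg : 1 <= hsize (gen i t)) by
    (unfold hsize; eapply Nat.le_trans; [|apply (sumn_ge _ _ i Hi)]; cbv beta; rewrite hval_gen, Nat.eqb_refl; auto;
     assert (2 <= D i) by (apply D_ge2; auto); destruct t; simpl; lia).
  - lia.
  - destruct (IHn c) as [zc [Gc Ec]]. lia. exists (gen i t :: zc). split. constructor; auto. apply isgen_gen; auto.
    change (hop (gen i t) (mprod HM zc) = hop (gen i t) c). congruence.
Qed.

Definition gens := flat_map (fun i => [gen i tU; gen i tV; gen i tW]) (seq 0 (length C)).

Lemma fg : finitely_generated HM.
Proof.
  exists gens. intros a. destruct (factor_exists (hsize a) a (le_n _)) as [z [Gz Ez]].
  exists z. split; auto. eapply Forall_impl; [|exact Gz]. intros x [i [t [Hi ->]]].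
  unfold gens. apply in_flat_map. exists i. split. apply in_seq; lia. destruct t; simpl; tauto.
Qed.

Definition PP := { p : nat * bool | fst p < length C }.
Definition phi (a : Hc) (p : PP) : nat :=
  let q := proj1_sig p in if snd q then fst (hval a (fst q)) else snd (hval a (fst q)).

Definition mkP (q : nat * bool) : list PP :=
  match lt_dec (fst q) (length C) with left h => [exist _ q h] | right _ => [] end.
Definition allP : list PP :=
  flat_map mkP (flat_map (fun i => [(i, true); (i, false)]) (seq 0 (length C))).

Lemma allP_spec p : In p allP.
Proof.
  destruct p as [[i b] h]. unfold allP. apply in_flat_map. exists (i, b). split.
  - apply in_flat_map. exists i. split. apply in_seq; simpl in h; lia. destruct b; simpl; tauto.
  - unfold mkP. destruct (lt_dec (fst (i, b)) (length C)). left. f_equal. apply proof_irrelevance. contradiction.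
Qed.

Lemma fs_all (f : PP -> nat) : fin_supp f.
Proof. exists allP. intros; apply allP_spec. Qed.

Definition fP (f : PP -> nat) (i : nat) (b : bool) : nat :=
  match lt_dec i (length C) with left h => f (exist _ (i, b) h) | right _ => 0 end.

Lemma fP_eq f i b h : fP f i b = f (exist _ (i, b) h).
Proof. unfold fP. destruct (lt_dec i (length C)); [|contradiction]. f_equal. f_equal. apply proof_irrelevance. Qed.

Lemma mul_ge d x : 1 <= d -> x <= d * x.
Proof. intros. destruct d. lia. simpl. lia. Qed.

Definition gA (f : PP -> nat) := fun i => (fP f i true, fP f i true + D i * fP f i false).
Definition gB (f : PP -> nat) := fun i => (fP f i false + D i * fP f i true, fP f i false).
Lemma gA_pf f : forall i, i < length C -> cong (D i) (fst (gA f i)) (snd (gA f i)).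
Proof. intros; unfold gA; simpl. exists (fP f i false), 0. lia. Qed.
Lemma gB_pf f : forall i, i < length C -> cong (D i) (fst (gB f i)) (snd (gB f i)).
Proof. intros; unfold gB; simpl. exists 0, (fP f i true). lia. Qed.

Fixpoint allfun (n : nat) : list (nat -> nat) :=
  match n with
  | 0 => [fun _ => 0]
  | S n => flat_map (fun v => map (fun x => fun i => if i =? n then x else v i) (seq 0 (D n))) (allfun n)
  end.

Lemma allfun_spec n (c : nat -> nat) : (forall i, i < n -> c i < D i) ->
  exists v, In v (allfun n) /\ forall i, i < n -> v i = c i.
Proof.
  induction n; intros Hc.
  - exists (fun _ => 0). split. simpl; auto. intros; lia.
  - destruct IHn as [v [Hv Ev]]. intros; apply Hc; lia.
    exists (fun i => if i =? n then c n else v i). split.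
    + simpl. apply in_flat_map. exists v. split; auto. apply in_map_iff. exists (c n). split; auto.
      apply in_seq. specialize (Hc n). lia.
    + intros i Hi. destruct (Nat.eqb_spec i n). subst; auto. apply Ev; lia.
Qed.

Definition rep (v : nat -> nat) : (PP -> nat) * (PP -> nat) :=
  (fun p : PP => if snd (proj1_sig p) then v (fst (proj1_sig p)) else 0, fun _ : PP => 0).

Definition Xv (f g : PP -> nat) i := fP f i true + fP g i false + (D i - 1) * (fP f i false + fP g i true).
Definition cv (f g : PP -> nat) i := Xv f g i mod D i.

Definition gb (f g : PP -> nat) := fun i => (cv f g i + fP g i true + fP f i false + (D i - 1) * fP f i true, fP g i false).
Lemma gb_pf f g : forall i, i < length C -> cong (D i) (fst (gb f g i)) (snd (gb f g i)).
Proof.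
  intros i Hi. unfold gb, cv; simpl. assert (2 <= D i) by (apply D_ge2; auto).
  exists (Xv f g i / D i), (fP f i true + fP f i false + fP g i true).
  assert (E := Nat.div_mod_eq (Xv f g i) (D i)). unfold Xv in *.
  remember (D i) as d. destruct d as [|e]. lia. simpl Nat.sub in *. rewrite Nat.sub_0_r in *.
  remember (fP f i true + fP g i false + e * (fP f i false + fP g i true)) as X.
  remember ((fP f i true + fP g i false + e * (fP f i false + fP g i true)) mod S e) as r.
  remember (X / S e) as q. rewrite <- HeqX in Heqr. rewrite <- Heqr in E.
  assert (S e * q = q + e * q) by reflexivity.
  assert (S e * (fP f i true + fP f i false + fP g i true) = (fP f i true + fP f i false + fP g i true) + e * (fP f i true + fP f i false + fP g i true)) by reflexivity.
  rewrite !Nat.mul_add_distr_l in *. lia.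
Qed.

Lemma krull : krull_finite_class_group HM.
Proof.
  exists PP, phi. split.
  - split; [|split; [|split; [|split]]].
    + intros; apply fs_all.
    + intros p. unfold phi. change (mone HM) with hone. rewrite hval_one. destruct (snd _); auto.
    + intros a b p. unfold phi. change (mop HM a b) with (hop a b). rewrite hval_op. destruct (snd _); auto.
    + intros a b Hle. destruct (hdiv b a) as [c Hc].
      * intros j. destruct (le_lt_dec (length C) j). rewrite !hval_out; auto.
        split; [apply (Hle (exist _ (j, true) l))|apply (Hle (exist _ (j, false) l))].
      * exists c; auto.
    + intros f _. exists [mkH (gA f) (gA_pf f); mkH (gB f) (gB_pf f)]. split. discriminate. split.
      * intros a Ha [[i b] h]. simpl in h. unfold phi; simpl.
        assert (1 <= D i) by (assert (2 <= D i) by (apply D_ge2; auto); lia).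
        destruct Ha as [<-|[<-|[]]]; rewrite hval_mk; auto; unfold gA, gB; rewrite <- (fP_eq f i b h); destruct b; simpl;
        pose proof (mul_ge (D i) (fP f i false) H); pose proof (mul_ge (D i) (fP f i true) H); lia.
      * intros g _ Hg [[i b] h]. simpl in h. rewrite <- (fP_eq f i b h), <- (fP_eq g i b h). destruct b.
        -- specialize (Hg _ (or_introl eq_refl) (exist _ (i, true) h)). unfold phi in Hg; cbn [proj1_sig fst snd] in Hg.
           rewrite hval_mk in Hg; auto. unfold gA in Hg; cbn [fst snd] in Hg. rewrite <- (fP_eq g i true h) in Hg. exact Hg.
        -- specialize (Hg _ (or_intror (or_introl eq_refl)) (exist _ (i, false) h)). unfold phi in Hg; cbn [proj1_sig fst snd] in Hg.
           rewrite hval_mk in Hg; auto. unfold gB in Hg; cbn [fst snd] in Hg. rewrite <- (fP_eq g i false h) in Hg. exact Hg.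
  - exists (map rep (allfun (length C))). split.
    + apply Forall_forall. intros; split; apply fs_all.
    + intros f g _ _. destruct (allfun_spec (length C) (cv f g)) as [v [Hv Ev]].
      { intros i Hi. apply Nat.mod_upper_bound. assert (2 <= D i) by (apply D_ge2; auto). lia. }
      exists (rep v). split. apply in_map; auto.
      exists (mkH (gB f) (gB_pf f)), (mkH (gb f g) (gb_pf f g)).
      intros [[i b] h]. simpl in h. unfold phi, rep; cbn [proj1_sig fst snd]. rewrite !hval_mk; auto. unfold gB, gb; cbn [fst snd].
      rewrite <- !fP_eq. rewrite Ev; auto.
      assert (2 <= D i) by (apply D_ge2; auto).
      destruct b; simpl; [|lia].
      remember (D i) as d. destruct d as [|e]. lia. simpl Nat.sub. rewrite Nat.sub_0_r.
      assert (S e * fP f i true = fP f i true + e * fP f i true) by reflexivity. lia.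
Qed.

Theorem main_props : finitely_generated HM /\ krull_finite_class_group HM /\
    (forall d, in_R HM d <-> In d C) /\
    (forall d, in_Ca HM d <-> In d C) /\
    (forall d, in_daleth_star HM d <-> (In d C /\ d <> 2)).
Proof. split. apply fg. split. apply krull. split. apply R_iff. split. apply Ca_iff. apply daleth_iff. Qed.

End Constr.

Theorem proposition3p2 :
  forall C : list nat, C <> nil -> (forall d, In d C -> 2 <= d) ->
  exists H : CMon,
    finitely_generated H /\ krull_finite_class_group H /\
    (forall d, in_R H d <-> In d C) /\
    (forall d, in_Ca H d <-> In d C) /\
    (forall d, in_daleth_star H d <-> (In d C /\ d <> 2)).
Proof.
  intros C _ HC. exists (HM C). apply main_props; auto.
Qed.
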